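(* Let $i$ be an index with $0\leq i<k$. An element $\lambda_t$ with $t>s$ is an order-$i$ seed of $\tilde\Lambda$ if and only if one of the following pairwise excluding conditions holds: (1) $\lambda_t$ is an order-$i$ seed of $\Lambda$; (2) $i<k-1$, $\lambda_t=\lambda_s+\lambda_{i+1}-\lambda_i$ and $\lambda_s$ is an order-$(i+1)$ seed of $\Lambda$; (3) $i=k-1=s-2$ and $\lambda_t=\lambda_s+\lambda_k-\lambda_{k-1}$; (4) $i=k-1=s-1$ and either $\lambda_t=\lambda_s+\lambda_k-\lambda_{k-1}$ or $\lambda_t=\lambda_s+\lambda_k-\lambda_{k-1}+1$.
   Context: A numerical semigroup is a subset $\Lambda\subseteq\mathbb{N}_0$ containing $0$, closed under addition, with finite complement; its genus $g$ is the number of gaps (elements of $\mathbb{N}_0\setminus\Lambda$). Write $\Lambda=\{\lambda_i\}_{i\geq 0}$ with $0=\lambda_0<\lambda_1<\lambda_2<\cdots$; let $k$ be the smallest index with $\lambda_i=i+g$ for all $i\geq k$, and $c=\lambda_k=k+g$ the conductor. A generator of a numerical semigroup is a non-zero element that is not the sum of two non-zero elements of it. For $i\geq 0$ let $\Lambda_i=\Lambda\setminus\{\lambda_1,\dots,\lambda_i\}$. An element $\lambda_t$ with $t\geq k$ is an order-$i$ seed of $\Lambda$ (for $0\leq i<k$) if $\lambda_t+\lambda_i$ is a generator of $\Lambda_i$. Fix an order-zero seed $\lambda_s$ of $\Lambda$ (so $s\geq k$ and $\lambda_s$ is a generator of $\Lambda$), and let $\tilde\Lambda=\Lambda\setminus\{\lambda_s\}$,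 a numerical semigroup of genus $g+1$ with elements $\tilde\lambda_i=\lambda_i$ for $i<s$, $\tilde\lambda_i=\lambda_{i+1}$ for $i\geq s$, and conductor $\lambda_s+1$. Thus an order-$i$ seed of $\tilde\Lambda$, with $0\leq i<s$, is an element $\lambda_t$ with $t>s$ such that $\lambda_t+\lambda_i$ is a generator of $\tilde\Lambda_i=\Lambda\setminus\{\lambda_1,\dots,\lambda_i,\lambda_s\}$. *)

(* Defs.v *)
(* A numerical semigroup is represented by the finite list G
   of its gaps: Lambda = { x : nat | x \notin G }. *)
From mathcomp Require Import all_boot.
Set Implicit Arguments. Unset Strict Implicit. Unset Printing Implicit Defensive.

Definition inS (G : seq nat) (x : nat) : Prop := x \notin G.

(* G is the gap set of a numerical semigroup: 0 in Lambda, closed under +.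
   (finite complement is automatic since G is a finite list) *)
Definition numsg (G : seq nat) : Prop :=
  inS G 0 /\ forall x y, inS G x -> inS G y -> inS G (x + y).

Definition genus (G : seq nat) : nat := size (undup G).

(* lam G i = lambda_i, the i-th element (from 0) of Lambda in increasing order.
   Among 0..i+size G there are at least i+1 elements of Lambda. *)
Definition lam (G : seq nat) (i : nat) : nat :=
  nth 0 [seq x <- iota 0 (i + size G).+1 | x \notin G] i.

Definition is_kidx (G : seq nat) (k : nat) : Prop :=
  (forall j, k <= j -> lam G j = j + genus G) /\
  (forall k', (forall j, k' <= j -> lam G j = j + genus G) -> k <= k').

Definition generator (P : nat -> Prop) (x : nat) : Prop :=
  P x /\ x <> 0 /\ ~ (exists a b, P a /\ P b /\ a <> 0 /\ b <> 0 /\ a + b = x).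

Definition Lam_i (G : seq nat) (i : nat) (y : nat) : Prop :=
  inS G y /\ forall j, 0 < j <= i -> y <> lam G j.

Definition seed (G : seq nat) (k i x : nat) : Prop :=
  exists t, k <= t /\ lam G t = x /\ generator (Lam_i G i) (x + lam G i).

(* Main.v *)
Require Import Defs.
From mathcomp Require Import all_boot zify.
From Stdlib Require Import Classical.
Set Implicit Arguments. Unset Strict Implicit. Unset Printing Implicit Defensive.


Definition Lf (G : seq nat) n := [seq x <- iota 0 n | x \notin G].

Lemma Lf_prefix G n m : n <= m ->
  Lf G m = Lf G n ++ [seq x <- iota n (m - n) | x \notin G].
Proof.
move=> le; rewrite /Lf -filter_cat.
by rewrite -{1}(subnKC le) iotaD.
Qed.

Lemma size_Lf G n : n - size G <= size (Lf G n).
Proof.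
have h1 := count_predC (mem G) (iota 0 n).
rewrite size_iota in h1.
have h2 : count (mem G) (iota 0 n) <= size G.
  rewrite -size_filter; apply: uniq_leq_size.
    by apply: filter_uniq; apply: iota_uniq.
  by move=> x; rewrite mem_filter => /andP[].
rewrite /Lf size_filter.
have -> : count (fun x => x \notin G) (iota 0 n) = count (predC (mem G)) (iota 0 n).
  by apply: eq_count.
lia.
Qed.

Lemma lamE G i n : i + size G < n -> lam G i = nth 0 (Lf G n) i.
Proof.
move=> lt; rewrite /lam -/(Lf G _) (Lf_prefix G lt) nth_cat.
have := size_Lf G (i + size G).+1.
case: ltnP => // h hs. exfalso. move: hs. rewrite subSn ?leq_addl // addnK => hs. by have := leq_trans hs h; rewrite ltnn.
Qed.

Lemma lam_notin G i : lam G i \notin G.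
Proof.
rewrite (@lamE G i _ (ltnSn _)).
have := size_Lf G (i + size G).+1 => hs.
have : nth 0 (Lf G (i + size G).+1) i \in Lf G (i + size G).+1.
  apply: mem_nth; lia.
by rewrite mem_filter => /andP[].
Qed.

Lemma lam_mono G i j : i < j -> lam G i < lam G j.
Proof.
move=> lt.
have e1 := @lamE G i (j + size G).+1 ltac:(lia).
have e2 := @lamE G j (j + size G).+1 ltac:(lia).
rewrite e1 e2.
have hs := size_Lf G (j + size G).+1.
have so : sorted ltn (Lf G (j + size G).+1).
  apply: sorted_filter; first exact: ltn_trans.
  exact: iota_ltn_sorted.
apply: (sorted_ltn_nth ltn_trans) => //; rewrite inE; apply: leq_trans hs; lia.
Qed.

Lemma lam_surj (G : seq nat) (y : nat) : y \notin G -> exists j, lam G j = y.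
Proof.
move=> yG.
have yin : y \in Lf G y.+1 by rewrite /Lf mem_filter yG mem_iota add0n ltnSn.
exists (index y (Lf G y.+1)).
set j := index y _.
have jlt : j < size (Lf G y.+1) by rewrite index_mem.
rewrite (@lamE G j (y.+1 + (j + size G).+1)); last lia.
rewrite (@Lf_prefix G y.+1); last lia.
by rewrite nth_cat jlt nth_index.
Qed.


Lemma smono_lt (f : nat -> nat) : (forall a b, a < b -> f a < f b) ->
  forall a b, (f a < f b) = (a < b).
Proof.
move=> H a b; case: (ltngtP a b) => [h|h|->].
- by apply: H.
- apply/negbTE; rewrite -leqNgt; apply: ltnW; by apply: H.
- by rewrite ltnn.
Qed.

Lemma smono_le (f : nat -> nat) : (forall a b, a < b -> f a < f b) ->
  forall a b, (f a <= f b) = (a <= b).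
Proof. by move=> H a b; rewrite leqNgt smono_lt // -leqNgt. Qed.

Lemma smono_unique (f h : nat -> nat) :
  (forall a b, a < b -> f a < f b) -> (forall a b, a < b -> h a < h b) ->
  (forall y, (exists j, f j = y) <-> (exists j, h j = y)) -> forall i, f i = h i.
Proof.
move=> Hf Hh E; elim/ltn_ind => i IH.
have [a ha] : exists a, f a = h i by apply/E; exists i.
have [b hb] : exists b, h b = f i by apply/E; exists i.
have ai : i <= a.
  rewrite leqNgt; apply/negP => lt.
  by have := smono_lt Hh a i; rewrite -IH // ha ltnn lt.
have bi : i <= b.
  rewrite leqNgt; apply/negP => lt.
  by have := smono_lt Hf b i; rewrite IH // hb ltnn lt.
have h1 : f i <= h i by rewrite -ha smono_le.
have h2 : h i <= f i by rewrite -hb smono_le.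
by apply/eqP; rewrite eqn_leq h1 h2.
Qed.

Lemma lam_lt (G : seq nat) (a b : nat) : (lam G a < lam G b) = (a < b).
Proof. exact: (smono_lt (lam_mono G) a b). Qed.
Lemma lam_le (G : seq nat) (a b : nat) : (lam G a <= lam G b) = (a <= b).
Proof. exact: (smono_le (lam_mono G) a b). Qed.
Lemma lam_inj (G : seq nat) (a b : nat) : lam G a = lam G b -> a = b.
Proof. by move=> e; apply/eqP; rewrite eqn_leq -(lam_le G a b) -(lam_le G b a) e leqnn. Qed.

Lemma img_lam (G : seq nat) (y : nat) : (exists j, lam G j = y) <-> y \notin G.
Proof.
split; last exact: lam_surj.
by move=> [j <-]; apply: lam_notin.
Qed.

Lemma lam0 (G : seq nat) : 0 \notin G -> lam G 0 = 0.
Proof.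
move=> h; have [m hm] := lam_surj h.
case: m hm => // m hm.
by have := lam_mono G (ltn0Sn m); rewrite hm.
Qed.

Lemma genus_cons (G : seq nat) a : a \notin G -> genus (a :: G) = (genus G).+1.
Proof. by move=> h; rewrite /genus /= (negbTE h). Qed.

Lemma lam_cons (G : seq nat) (s j : nat) :
  lam (lam G s :: G) j = if j < s then lam G j else lam G j.+1.
Proof.
set h := fun j => if j < s then lam G j else lam G j.+1.
change (lam (lam G s :: G) j = h j).
apply: smono_unique; first exact: lam_mono.
- move=> a b ab; rewrite /h.
  case: (ltnP a s) => ha; case: (ltnP b s) => hb; rewrite lam_lt; lia.
- move=> y; rewrite img_lam in_cons negb_or; split.
  + move=> /andP[ys yG]; have [m hm] := lam_surj yG.
    have ms : m != s by apply: contraNneq ys => e; rewrite -hm e.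
    case: (ltngtP m s) => [lt|gt|e]; last by rewrite e eqxx in ms.
    * by exists m; rewrite /h lt.
    * exists m.-1; rewrite /h; have -> : m.-1 < s = false by lia.
      by rewrite prednK //; lia.
  + move=> [j' <-]; rewrite /h; case: (ltnP j' s) => hj; rewrite lam_notin andbT;
    apply/negP => /eqP /lam_inj; lia.
Qed.



Definition Dec (G : seq nat) (i x : nat) :=
  exists a b, i < a /\ i < b /\ lam G a + lam G b = x.
Definition DecT (G : seq nat) (s i x : nat) :=
  exists a b, i < a /\ i < b /\ a <> s /\ b <> s /\ lam G a + lam G b = x.

Lemma LamNZ (G : seq nat) (i y : nat) : 0 \notin G ->
  (Lam_i G i y /\ y <> 0) <-> exists j, i < j /\ y = lam G j.
Proof.
move=> h0; split.
- move=> [[yG H] y0]; have [m hm] := lam_surj yG.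
  exists m; split => //.
  rewrite ltnNge; apply/negP => mi.
  case: m hm mi => [|m] hm mi; first by apply: y0; rewrite -hm lam0.
  by apply: (H m.+1) => //; rewrite mi.
- move=> [j [ij ->]]; split; first split.
  + exact: lam_notin.
  + move=> j' /andP[_ j'i] /lam_inj; lia.
  + by have := lam_mono G (leq_ltn_trans (leq0n i) ij); rewrite lam0 //; lia.
Qed.

Lemma LamT (G : seq nat) (s i y : nat) : i < s ->
  Lam_i (lam G s :: G) i y <-> Lam_i G i y /\ y <> lam G s.
Proof.
move=> his; rewrite /Lam_i /inS in_cons negb_or; split.
- move=> [/andP[ys yG] H]; split; last by apply/eqP.
  split => // j jr; have := H j jr; rewrite lam_cons.
  by have -> : j < s by move: jr => /andP[_]; lia.
- move=> [[yG H] ys]; split; first by rewrite yG andbT; apply/eqP.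
  move=> j jr; rewrite lam_cons.
  have -> : j < s by move: jr => /andP[_]; lia.
  exact: H.
Qed.

Lemma LamNZT (G : seq nat) (s i y : nat) : 0 \notin G -> i < s ->
  (Lam_i (lam G s :: G) i y /\ y <> 0) <-> exists j, i < j /\ j <> s /\ y = lam G j.
Proof.
move=> h0 his; rewrite LamT //; split.
- move=> [[L ys] y0].
  have [j [ij e]] : exists j, i < j /\ y = lam G j by apply/LamNZ.
  by exists j; split => //; split => // js; apply: ys; rewrite e js.
- move=> [j [ij [js e]]].
  have [L y0] : Lam_i G i y /\ y <> 0 by apply/LamNZ => //; exists j.
  by split => //; split => // e2; apply: js; apply: (@lam_inj G); rewrite -e.
Qed.

Lemma gen_Dec (G : seq nat) (i m x : nat) : 0 \notin G -> i < m -> x = lam G m ->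
  generator (Lam_i G i) x <-> ~ Dec G i x.
Proof.
move=> h0 im ex; split.
- move=> [_ [_ nd]] [a [b [ia [ib e]]]]; apply: nd.
  exists (lam G a), (lam G b).
  have [Pa a0] : Lam_i G i (lam G a) /\ lam G a <> 0 by apply/LamNZ => //; exists a.
  have [Pb b0] : Lam_i G i (lam G b) /\ lam G b <> 0 by apply/LamNZ => //; exists b.
  by [].
- move=> nd.
  have [Px x0] : Lam_i G i x /\ x <> 0 by apply/LamNZ => //; exists m.
  split => //; split => //.
  move=> [a [b [Pa [Pb [a0 [b0 e]]]]]].
  have [ja [ia ea]] : exists j, i < j /\ a = lam G j by apply/LamNZ.
  have [jb [ib eb]] : exists j, i < j /\ b = lam G j by apply/LamNZ.
  by apply: nd; exists ja, jb; rewrite -ea -eb.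
Qed.

Lemma gen_DecT (G : seq nat) (s i m x : nat) : 0 \notin G -> i < s -> i < m -> m <> s ->
  x = lam G m ->
  generator (Lam_i (lam G s :: G) i) x <-> ~ DecT G s i x.
Proof.
move=> h0 his im ms ex; split.
- move=> [_ [_ nd]] [a [b [ia [ib [a_s [b_s e]]]]]]; apply: nd.
  exists (lam G a), (lam G b).
  have [Pa a0] : Lam_i (lam G s :: G) i (lam G a) /\ lam G a <> 0
    by apply/LamNZT => //; exists a.
  have [Pb b0] : Lam_i (lam G s :: G) i (lam G b) /\ lam G b <> 0
    by apply/LamNZT => //; exists b.
  by [].
- move=> nd.
  have [Px x0] : Lam_i (lam G s :: G) i x /\ x <> 0 by apply/LamNZT => //; exists m.
  split => //; split => //.
  move=> [a [b [Pa [Pb [a0 [b0 e]]]]]].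
  have [ja [ia [jas ea]]] : exists j, i < j /\ j <> s /\ a = lam G j by apply/LamNZT.
  have [jb [ib [jbs eb]]] : exists j, i < j /\ j <> s /\ b = lam G j by apply/LamNZT.
  by apply: nd; exists ja, jb; rewrite -ea -eb.
Qed.


Lemma seed_iff (G : seq nat) (k i u : nat) : 0 \notin G ->
  (forall j, k <= j -> lam G j = j + genus G) -> i < k -> k <= u ->
  seed G k i (lam G u) <-> ~ Dec G i (lam G u + lam G i).
Proof.
move=> h0 HK ik ku.
have Lu := HK u ku.
have Li := lam_mono G (leq_trans ik ku).
set m := lam G u + lam G i - genus G.
have km : k <= m by rewrite /m; lia.
have Lm := HK m km.
have ex : lam G u + lam G i = lam G m by rewrite Lm /m; lia.
have im : i < m by lia.
split.
- move=> [t' [kt' [e gen]]]; have t'u := lam_inj e; subst t'.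
  by apply/(gen_Dec h0 im ex).
- move=> nd; exists u; split => //; split => //.
  by apply/(gen_Dec h0 im ex).
Qed.

Lemma seedT_iff (G : seq nat) (k kt s i t : nat) : 0 \notin G ->
  (forall j, k <= j -> lam G j = j + genus G) -> i < k -> k <= s -> s < t ->
  kt <= s ->
  seed (lam G s :: G) kt i (lam G t) <-> ~ DecT G s i (lam G t + lam G i).
Proof.
move=> h0 HK ik ks st kts.
have Lu := HK t (leq_trans ks (ltnW st)).
have Li := lam_mono G (leq_trans ik (leq_trans ks (ltnW st))).
set m := lam G t + lam G i - genus G.
have km : t <= m by rewrite /m; lia.
have Lm := HK m (leq_trans ks (ltnW (leq_trans st km))).
have ex : lam G t + lam G i = lam G m by rewrite Lm /m; lia.
have im : i < m by lia.
have ms : m <> s by lia.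
have is' : i < s by lia.
have Lti : lam (lam G s :: G) i = lam G i by rewrite lam_cons is'.
split.
- move=> [t' [kt' [e gen]]].
  by rewrite Lti in gen; apply/(gen_DecT h0 is' im ms ex).
- move=> nd; exists t.-1; split; first lia.
  split.
    rewrite lam_cons; have -> : t.-1 < s = false by lia.
    by rewrite prednK //; lia.
  by rewrite Lti; apply/(gen_DecT h0 is' im ms ex).
Qed.


Set Default Proof Using "All".
Section Core.
Variables (G : seq nat) (k s i t : nat).
Hypothesis HK : forall j, k <= j -> lam G j = j + genus G.
Hypotheses (ik : i < k) (ks : k <= s) (st : s < t).

Let x := lam G t + lam G i.

Lemma core_fwd : ~ DecT G s i x -> Dec G i x ->
  (i < k.-1 /\ lam G t = lam G s + lam G i.+1 - lam G i /\
     ~ Dec G i.+1 (lam G s + lam G i.+1)) \/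
  (i.+1 = k /\ k.+1 = s /\ lam G t = lam G s + lam G k - lam G k.-1) \/
  (i.+1 = k /\ k = s /\
     (lam G t = lam G s + lam G k - lam G k.-1 \/
      lam G t = lam G s + lam G k - lam G k.-1 + 1)).
Proof.
move=> nT [a [b [ia [ib e]]]].
have [c [ic ec]] : exists c, i < c /\ lam G s + lam G c = x.
  case: (eqVneq a s) => [as_|as_]; first by exists b; rewrite -as_.
  case: (eqVneq b s) => [bs|bs]; first by exists a; rewrite -bs addnC.
  exfalso; apply: nT; exists a, b; split => //; split => //.
  by split; [apply/eqP|split; [apply/eqP|]].
have Ls := HK ks.
have Lii := lam_mono G (ltnSn i).
have Lt := HK (leq_trans ks (ltnW st)).
rewrite /x in ec.
case: (ltngtP c i.+1) => [ci|ci|ci]; first lia.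
-
  have Lci := lam_mono G ci.
  case: (eqVneq i.+1 s) => [is_|is_].
  + have sk : s = k by lia.
    case: (ltngtP c s.+1) => [cs|cs|cs]; first lia.
    * exfalso; apply: nT; exists s.+1, c.-1.
      have L1 := HK (j := s.+1) ltac:(lia).
      have L2 := HK (j := c.-1) ltac:(lia).
      have L3 := HK (j := c) ltac:(lia).
      do 4 (split; first lia). rewrite /x; lia.
    * right; right; subst c.
      have L1 := HK (j := s.+1) ltac:(lia).
      have -> : k.-1 = i by lia.
      rewrite -sk; split; first lia; split => //; right; lia.
  + exfalso; apply: nT.
    set m := lam G s + lam G c - lam G i.+1 - genus G.
    have Lm := HK (j := m) ltac:(rewrite /m; lia).
    exists i.+1, m.
    split; first lia. split; first (rewrite /m; lia).
    split; first by apply/eqP. split; first (rewrite /m; lia).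
    rewrite /x Lm /m; lia.
-
  subst c.
  case: (ltngtP i.+1 k) => [ik1|ik1|ik1]; last first.
  +
    have -> : k.-1 = i by lia.
    rewrite ik1 in ec.
    case: (ltngtP s k.+1) => [sk|sk|sk].
    * right; right; have sk' : k = s by lia.
      by split => //; split => //; left; lia.
    * exfalso; apply: nT; exists k.+1, s.-1.
      have L1 := HK (j := k.+1) ltac:(lia).
      have L2 := HK (j := s.-1) ltac:(lia).
      have L3 := HK (j := k) ltac:(lia).
      do 4 (split; first lia). rewrite /x; lia.
    * right; left; split => //; split => //; lia.
  + lia.
  + left; split; first lia. split; first lia.
    move=> [a' [b' [ia' [ib' e']]]]; apply: nT.
    case: (eqVneq a' s) => [as_|as_].
      subst a'; have := lam_inj (G := G) (a := b') (b := i.+1) ltac:(lia); lia.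
    case: (eqVneq b' s) => [bs|bs].
      subst b'; have := lam_inj (G := G) (a := a') (b := i.+1) ltac:(lia); lia.
    exists a', b'; split; first lia; split; first lia.
    split; first by apply/eqP. split; first by apply/eqP. rewrite /x; lia.
Qed.
End Core.


Set Default Proof Using "All".
Section Core2.
Variables (G : seq nat) (k s i t : nat).
Hypothesis HK : forall j, k <= j -> lam G j = j + genus G.
Hypotheses (ik : i < k) (ks : k <= s) (st : s < t).

Let x := lam G t + lam G i.

Lemma bwd1 : ~ Dec G i x -> ~ DecT G s i x.
Proof. by move=> nd [a [b [ia [ib [_ [_ e]]]]]]; apply: nd; exists a, b. Qed.

Lemma bwd2 : lam G t = lam G s + lam G i.+1 - lam G i ->
  ~ Dec G i.+1 (lam G s + lam G i.+1) -> ~ DecT G s i x.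
Proof.
move=> et nd [a [b [ia [ib [a_s [b_s e]]]]]].
have Lii := lam_mono G (ltnSn i).
case: (eqVneq a i.+1) => [ai|ai].
  subst a; apply: b_s; apply: (@lam_inj G); rewrite /x in e; lia.
case: (eqVneq b i.+1) => [bi|bi].
  subst b; apply: a_s; apply: (@lam_inj G); rewrite /x in e; lia.
apply: nd; exists a, b; split; first lia; split; first lia.
rewrite /x in e; lia.
Qed.

Lemma bwd3 : i.+1 = k -> k.+1 = s -> lam G t = lam G s + lam G k - lam G k.-1 ->
  ~ DecT G s i x.
Proof.
move=> ik1 ks1 et [a [b [ia [ib [a_s [b_s e]]]]]].
have Ls := HK ks. have Lk := HK (leqnn k).
have La := HK (j := a) ltac:(lia). have Lb := HK (j := b) ltac:(lia).
have Lik := lam_mono G ik.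
have kii : k.-1 = i by lia.
rewrite kii in et; rewrite /x in e; lia.
Qed.

Lemma bwd4 : i.+1 = k -> k = s ->
  (lam G t = lam G s + lam G k - lam G k.-1 \/
   lam G t = lam G s + lam G k - lam G k.-1 + 1) ->
  ~ DecT G s i x.
Proof.
move=> ik1 ks1 et [a [b [ia [ib [a_s [b_s e]]]]]].
have Ls := HK ks. have Lk := HK (leqnn k).
have La := HK (j := a) ltac:(lia). have Lb := HK (j := b) ltac:(lia).
have Lik := lam_mono G ik.
have kii : k.-1 = i by lia.
rewrite kii in et; rewrite /x in e; lia.
Qed.

Lemma ex2 : lam G t = lam G s + lam G i.+1 - lam G i -> Dec G i x.
Proof.
move=> et; have Lii := lam_mono G (ltnSn i).
exists s, i.+1; split; first lia; split; first lia; rewrite /x; lia.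
Qed.

Lemma ex3 : i.+1 = k -> lam G t = lam G s + lam G k - lam G k.-1 -> Dec G i x.
Proof.
move=> ik1 et; have Lik := lam_mono G ik.
have kii : k.-1 = i by lia. rewrite kii in et.
exists s, k; split; first lia; split; first lia; rewrite /x; lia.
Qed.

Lemma ex4 : i.+1 = k -> k = s ->
  lam G t = lam G s + lam G k - lam G k.-1 + 1 -> Dec G i x.
Proof.
move=> ik1 ks1 et; have Lik := lam_mono G ik.
have Ls := HK ks. have Lk := HK (leqnn k). have Ls1 := HK (j := s.+1) ltac:(lia).
have kii : k.-1 = i by lia. rewrite kii in et.
exists s, s.+1; split; first lia; split; first lia; rewrite /x; lia.
Qed.
End Core2.

Unset Implicit Arguments. Set Strict Implicit.
Theorem lemma2 (G : seq nat) (k s kt i t : nat) :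
  numsg G -> is_kidx G k ->
  k <= s -> seed G k 0 (lam G s) ->
  is_kidx (lam G s :: G) kt ->
  i < k -> s < t ->
  let Gt := lam G s :: G in
  let C1 := seed G k i (lam G t) in
  let C2 := i < k.-1 /\ lam G t = lam G s + lam G i.+1 - lam G i /\
            seed G k i.+1 (lam G s) in
  let C3 := i.+1 = k /\ k.+1 = s /\
            lam G t = lam G s + lam G k - lam G k.-1 in
  let C4 := i.+1 = k /\ k = s /\
            (lam G t = lam G s + lam G k - lam G k.-1 \/
             lam G t = lam G s + lam G k - lam G k.-1 + 1) in
  (seed Gt kt i (lam G t) <-> C1 \/ C2 \/ C3 \/ C4) /\
  ~ (C1 /\ C2) /\ ~ (C1 /\ C3) /\ ~ (C1 /\ C4) /\
  ~ (C2 /\ C3) /\ ~ (C2 /\ C4) /\ ~ (C3 /\ C4).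
Proof.
move=> [h0 _] [HK _] ks _ [_ Hkt] ik st.
cbv zeta.
have h0' : 0 \notin G := h0.
have sG : lam G s \notin G := lam_notin G s.
have kts : kt <= s.
  apply: Hkt => j js.
  rewrite lam_cons genus_cons //.
  have -> : j < s = false by lia.
  rewrite HK; lia.
have hT := seedT_iff h0' HK ik ks st kts.
have h1 := seed_iff h0' HK ik (leq_trans ks (ltnW st)).
have h2 : i < k.-1 -> (seed G k i.+1 (lam G s) <-> ~ Dec G i.+1 (lam G s + lam G i.+1)).
  by move=> ik1; apply: seed_iff => //; lia.
split; first split.
- move/hT => nT.
  case: (classic (Dec G i (lam G t + lam G i))) => [d|nd]; last by left; apply/h1.
  case: (core_fwd HK ik ks st nT d) => [[a [b c]]|[c3|c4]].
  + by right; left; split => //; split => //; apply/h2.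
  + by right; right; left.
  + by right; right; right.
- move=> [c1|[[a [b c]]|[[a [b c]]|[a [b c]]]]]; apply/hT.
  + by apply: (bwd1 HK ik ks st); apply/h1.
  + by apply: (bwd2 HK ik ks st b); apply/h2.
  + exact: (bwd3 HK ik ks st a b c).
  + exact: (bwd4 HK ik ks st a b c).
- split; first by move=> [c1 [_ [b _]]]; move/h1: c1 => nd; apply: nd; apply: (ex2 HK ik ks st b).
  split; first by move=> [c1 [a [_ c]]]; move/h1: c1 => nd; apply: nd; apply: (ex3 HK ik ks st a c).
  split.
    move=> [c1 [a [b [c|c]]]]; move/h1: c1 => nd; apply: nd.
      exact: (ex3 HK ik ks st a c).
    exact: (ex4 HK ik ks st a b c).
  split; first by move=> [[a _] [b _]]; lia.
  split; first by move=> [[a _] [b _]]; lia.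
  by move=> [[_ [a _]] [_ [b _]]]; lia.
Qed.
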